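(* For every computable endofunctor $d$, every represented space $\mathbf{Y}$ is $\kappa^d$-admissible, i.e. $\kappa^{(\kappa^d)}:\kappa^d\mathbf{Y}\to\mathcal{C}(\mathcal{O}(\mathbf{Y}),\kappa^d\mathbb{S})$ is injective with computable inverse on its image.
   Context: Represented spaces $(X,\delta_X)$ with $\delta_X:\subseteq\{0,1\}^\mathbb{N}\to X$ partial surjective; computable/continuous maps via realizers; $\mathcal{C}(\mathbf{X},\mathbf{Y})$ the represented space of continuous maps. $\mathbb{S}=(\{\bot,\top\},\delta_\mathbb{S})$, $\delta_\mathbb{S}(0^\mathbb{N})=\bot$, $\delta_\mathbb{S}(p)=\top$ otherwise; $\mathcal{O}(\mathbf{Y})=\mathcal{C}(\mathbf{Y},\mathbb{S})$. A computable endofunctor is an endofunctor $d$ on represented spaces with continuous maps such that each $f\mapsto df$ is computable. For such $d$ (or any computable endofunctor $e$), $\kappa^e:e\mathbf{Y}\to\mathcal{C}(\mathcal{O}(\mathbf{Y}),e\mathbb{S})$ is $\kappa^e(y)(U)=(eU)(y)$; $\mathbf{Y}$ is $e$-admissible if $\kappa^e$ is injective with computable inverse on its image. $\kappa^d$ is the computable endofunctor sending $\mathbf{Y}$ to the image $\kappa^d\mathbf{Y}$ of $\kappa^d:d\mathbf{Y}\to\mathcal{C}(\mathcal{O}(\mathbf{Y}),d\mathbb{S})$ and a continuous $f:\mathbf{Y}\to\mathbf{Z}$ to $\varphi\mapsto(V\mapsto\varphi(V\circ f))$. *)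

(* Defs.v *)
From Stdlib Require Import Arith Lia List Cantor ClassicalEpsilon FunctionalExtensionality ProofIrrelevance.
Import ListNotations.

Inductive prf : Type :=
| pZero | pSucc | pProj (i : nat) | pComp (f : prf) (gs : list prf)
| pPrec (f g : prf) | pMin (f : prf).

Inductive peval : prf -> list nat -> nat -> Prop :=
| peZero xs : peval pZero xs 0
| peSucc x xs : peval pSucc (x :: xs) (S x)
| peProj i xs : i < length xs -> peval (pProj i) xs (nth i xs 0)
| peComp f gs xs ys y : pevals gs xs ys -> peval f ys y -> peval (pComp f gs) xs y
| pePrec0 f g xs y : peval f xs y -> peval (pPrec f g) (0 :: xs) y
| pePrecS f g n xs r y : peval (pPrec f g) (n :: xs) r -> peval g (n :: r :: xs) y ->
    peval (pPrec f g) (S n :: xs) y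
| peMin f xs n : peval f (n :: xs) 0 ->
    (forall m, m < n -> exists k, peval f (m :: xs) (S k)) -> peval (pMin f) xs n
with pevals : list prf -> list nat -> list nat -> Prop :=
| pesNil xs : pevals [] xs []
| pesCons g gs xs y ys : peval g xs y -> pevals gs xs ys -> pevals (g :: gs) xs (y :: ys).

Definition Cantor := nat -> bool.

Definition computable_seq (q : Cantor) : Prop :=
  exists c : prf, forall n, peval c [n] (if q n then 1 else 0).

Definition prefix (p : Cantor) (k : nat) : list bool := map p (seq 0 k).

Fixpoint code (w : list bool) : nat :=
  match w with [] => 0 | b :: w' => 2 * code w' + 1 + (if b then 1 else 0) end.

Definition idx (n : nat) (w : list bool) (b : bool) : nat :=
  to_nat (to_nat (n, code w), if b then 1 else 0).

Lemma code_inj w w' : code w = code w' -> w = w'.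
Proof.
  revert w'; induction w as [|b w IH]; intros [|b' w'] H; simpl in H; try lia; auto.
  destruct b, b'; try lia; f_equal; apply IH; lia.
Qed.

Lemma to_nat_inj x y : to_nat x = to_nat y -> x = y.
Proof. intro H. rewrite <- (cancel_of_to x), <- (cancel_of_to y). now rewrite H. Qed.

Lemma idx_inj n w b n' w' b' : idx n w b = idx n' w' b' -> n = n' /\ w = w' /\ b = b'.
Proof.
  unfold idx; intro H.
  apply to_nat_inj in H.
  pose proof (f_equal fst H) as H1; pose proof (f_equal snd H) as H2; cbn [fst snd] in H1, H2.
  apply to_nat_inj in H1.
  pose proof (f_equal fst H1) as H3; pose proof (f_equal snd H1) as H4; cbn [fst snd] in H3, H4.
  subst n'. apply code_inj in H4.
  split; [auto|split; [auto|]]. destruct b, b'; simpl in H2; congruence.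
Qed.

Lemma prefix_length p k : length (prefix p k) = k.
Proof. unfold prefix; now rewrite length_map, length_seq. Qed.

Lemma prefix_ext p p' k : prefix p k = prefix p' k <-> forall i, i < k -> p i = p' i.
Proof.
  unfold prefix; induction k as [|k IH]; split; intros H.
  - intros; lia.
  - reflexivity.
  - rewrite seq_S, !map_app in H. simpl in H.
    apply app_inj_tail in H as [H1 H2].
    intros i Hi. destruct (Nat.eq_dec i k) as [->|]; [auto|].
    apply IH; [exact H1|lia].
  - rewrite seq_S, !map_app. simpl. f_equal.
    + apply IH; intros; apply H; lia.
    + f_equal; apply H; lia.
Qed.

Lemma prefix_le p p' k j : j <= k -> prefix p k = prefix p' k -> prefix p j = prefix p' j.
Proof. intros Hj H; apply prefix_ext; intros; apply prefix_ext with (k := k); auto; lia. Qed.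

(** * Associates: the standard representation of continuous partial maps *)
Definition assoc (q : Cantor) (p r : Cantor) : Prop :=
  forall n, (exists k, q (idx n (prefix p k) false) = true) /\
            (forall k, q (idx n (prefix p k) false) = true -> q (idx n (prefix p k) true) = r n).

Lemma assoc_uniq q p r r' : assoc q p r -> assoc q p r' -> r = r'.
Proof.
  intros H H'; apply functional_extensionality; intro n.
  destruct (H n) as [[k Hk] H1]; destruct (H' n) as [_ H2].
  rewrite <- (H1 k Hk); auto.
Qed.

Definition bool_of (P : Prop) : bool := if excluded_middle_informative P then true else false.
Lemma bool_of_true (P : Prop) : bool_of P = true <-> P.
Proof. unfold bool_of; destruct excluded_middle_informative; split; intros; auto; discriminate. Qed.

Definition eta (q p : Cantor) : Cantor := fun n =>
  bool_of (exists k, q (idx n (prefix p k) false) = true /\ q (idx n (prefix p k) true) = true).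

Lemma eta_assoc q p r : assoc q p r -> eta q p = r.
Proof.
  intro H; apply functional_extensionality; intro n.
  destruct (H n) as [[k Hk] H1].
  destruct (r n) eqn:E.
  - apply bool_of_true. exists k; split; [auto|]. rewrite H1; auto.
  - destruct (eta q p n) eqn:E'; auto.
    apply bool_of_true in E' as [k' [H2 H3]]. rewrite H1 in H3; congruence.
Qed.

Definition cont_on (D : Cantor -> Prop) (F : Cantor -> Cantor) : Prop :=
  forall p, D p -> forall n, exists k, forall p', D p' -> prefix p' k = prefix p k -> F p' n = F p n.

Lemma assoc_cont D q F : (forall p, D p -> assoc q p (F p)) -> cont_on D F.
Proof.
  intros H p Hp n. destruct (H p Hp n) as [[k Hk] H1].
  exists k; intros p' Hp' E. destruct (H p' Hp' n) as [_ H2].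
  rewrite <- (H1 k Hk). rewrite <- E. symmetry. apply H2. now rewrite E.
Qed.

Lemma cont_assoc D F : cont_on D F -> exists q, forall p, D p -> assoc q p (F p).
Proof.
  intro HF.
  set (P0 := fun n w => exists p, D p /\ prefix p (length w) = w /\
        forall p', D p' -> prefix p' (length w) = w -> F p' n = F p n).
  set (P1 := fun n w => exists p, D p /\ prefix p (length w) = w /\ F p n = true /\
        forall p', D p' -> prefix p' (length w) = w -> F p' n = F p n).
  exists (fun m => bool_of ((exists n w, m = idx n w false /\ P0 n w) \/
                         (exists n w, m = idx n w true /\ P1 n w))).
  assert (E0 : forall n w, bool_of ((exists n' w', idx n w false = idx n' w' false /\ P0 n' w') \/
                         (exists n' w', idx n w false = idx n' w' true /\ P1 n' w')) = true <-> P0 n w).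
  { intros n w; rewrite bool_of_true; split.
    - intros [[n' [w' [E H]]]|[n' [w' [E H]]]]; apply idx_inj in E as (-> & -> & E); [auto|discriminate].
    - intro; left; eauto. }
  assert (E1 : forall n w, bool_of ((exists n' w', idx n w true = idx n' w' false /\ P0 n' w') \/
                         (exists n' w', idx n w true = idx n' w' true /\ P1 n' w')) = true <-> P1 n w).
  { intros n w; rewrite bool_of_true; split.
    - intros [[n' [w' [E H]]]|[n' [w' [E H]]]]; apply idx_inj in E as (-> & -> & E); [discriminate|auto].
    - intro; right; eauto. }
  intros p Hp n; split.
  - destruct (HF p Hp n) as [k Hk]. exists k. apply E0.
    exists p; rewrite prefix_length; split; [auto|split; auto].
  - intros k Hk. apply E0 in Hk as [p0 [Hp0 [Ep0 Hk]]]. rewrite prefix_length in Ep0, Hk.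
    destruct (F p n) eqn:EF.
    + apply E1. exists p; rewrite prefix_length; split; [auto|split; [auto|split; auto]].
      intros p' Hp' E'. rewrite (Hk p' Hp' E'), (Hk p Hp eq_refl). reflexivity.
    + destruct (bool_of _) eqn:EB; auto.
      apply E1 in EB as [p1 [Hp1 [Ep1 [T Hk1]]]]. rewrite prefix_length in Ep1, Hk1.
      rewrite (Hk1 p Hp eq_refl) in EF; congruence.
Qed.

Lemma cont_prefix D F p : cont_on D F -> D p -> forall m, exists k,
  forall p', D p' -> prefix p' k = prefix p k -> prefix (F p') m = prefix (F p) m.
Proof.
  intros HF Hp m; induction m as [|m [k IH]].
  - exists 0; intros; reflexivity.
  - destruct (HF p Hp m) as [k' Hk']. exists (max k k'); intros p' Hp' E.
    apply prefix_ext; intros i Hi.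
    destruct (Nat.eq_dec i m) as [->|].
    + apply Hk'; auto. eapply prefix_le; [|exact E]; lia.
    + apply prefix_ext with (k := m); [|lia]. apply IH; auto.
      eapply prefix_le; [|exact E]; lia.
Qed.

Lemma cont_comp D E F G : cont_on D F -> cont_on E G -> (forall p, D p -> E (F p)) ->
  cont_on D (fun p => G (F p)).
Proof.
  intros HF HG HDE p Hp n.
  destruct (HG (F p) (HDE p Hp) n) as [m Hm].
  destruct (cont_prefix D F p HF Hp m) as [k Hk].
  exists k; intros p' Hp' Ep. apply Hm; auto.
Qed.

Lemma prefix_big (w w' : Cantor) K i : prefix w' K = prefix w K -> i < K -> w' i = w i.
Proof. intros E Hi. apply prefix_ext with (k := K); auto. Qed.

Lemma eta_cont_assoc p : cont_on (fun w => exists r, assoc w p r) (fun w => eta w p).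
Proof.
  intros w [r Hr] n. rewrite (eta_assoc _ _ _ Hr).
  destruct (Hr n) as [[k Hk] H1].
  exists (S (max (idx n (prefix p k) false) (idx n (prefix p k) true))).
  intros w' [r' Hr'] E. rewrite (eta_assoc _ _ _ Hr').
  destruct (Hr' n) as [_ H2].
  assert (A0 : w' (idx n (prefix p k) false) = w (idx n (prefix p k) false))
    by (apply prefix_big with (1 := E); lia).
  assert (A1 : w' (idx n (prefix p k) true) = w (idx n (prefix p k) true))
    by (apply prefix_big with (1 := E); lia).
  rewrite <- (H2 k) by congruence. rewrite A1. auto.
Qed.

Record rep_space : Type := {
  carrier : Type;
  rep : Cantor -> carrier -> Prop;   (* rep p x  <->  delta(p) = x *)
  rep_sv : forall p x y, rep p x -> rep p y -> x = y;
  rep_surj : forall x, exists p, rep p x }.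

Definition dom (X : rep_space) (p : Cantor) : Prop := exists x, rep X p x.

Definition realizes {X Y : rep_space} (q : Cantor) (f : carrier X -> carrier Y) : Prop :=
  forall p x, rep X p x -> exists r, assoc q p r /\ rep Y r (f x).

Definition continuous {X Y : rep_space} (f : carrier X -> carrier Y) : Prop :=
  exists q, realizes q f.

Definition computable {X Y : rep_space} (f : carrier X -> carrier Y) : Prop :=
  exists q, computable_seq q /\ realizes q f.

Lemma realizes_eta {X Y : rep_space} q (f : carrier X -> carrier Y) : realizes q f ->
  forall p x, rep X p x -> assoc q p (eta q p) /\ rep Y (eta q p) (f x).
Proof.
  intros H p x Hx. destruct (H p x Hx) as [r [Hr Hr']]. rewrite (eta_assoc _ _ _ Hr); auto.
Qed.

Lemma continuous_of_realizer {X Y : rep_space} (f : carrier X -> carrier Y) F :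
  cont_on (dom X) F -> (forall p x, rep X p x -> rep Y (F p) (f x)) -> continuous f.
Proof.
  intros HF HR. destruct (cont_assoc _ _ HF) as [q Hq].
  exists q; intros p x Hx. exists (F p); split; [apply Hq; exists x; auto | auto].
Qed.

Lemma realizes_cont {X Y : rep_space} q (f : carrier X -> carrier Y) : realizes q f ->
  cont_on (dom X) (eta q).
Proof.
  intro H. apply assoc_cont with (q := q). intros p [x Hx]. apply (realizes_eta q f H p x Hx).
Qed.

Definition Cspace (X Y : rep_space) : rep_space.
Proof.
  refine {| carrier := {f : carrier X -> carrier Y | continuous f};
            rep := fun q f => realizes q (proj1_sig f) |}.
  - intros q [f Hf] [g Hg] H1 H2; simpl in *.
    assert (f = g) as ->.
    { apply functional_extensionality; intro x. destruct (rep_surj X x) as [p Hp].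
      destruct (H1 p x Hp) as [r1 [A1 B1]]; destruct (H2 p x Hp) as [r2 [A2 B2]].
      rewrite (assoc_uniq _ _ _ _ A1 A2) in B1. eapply rep_sv; eauto. }
    f_equal; apply proof_irrelevance.
  - intros [f [q Hq]]; exists q; exact Hq.
Defined.

Definition cval {X Y : rep_space} (f : carrier (Cspace X Y)) : carrier X -> carrier Y := proj1_sig f.

(** Sierpinski space: false = bottom, true = top *)
Definition Sier : rep_space.
Proof.
  refine {| carrier := bool; rep := fun p b => (b = true <-> exists n, p n = true) |}.
  - intros p [|] [|] H1 H2; auto.
    + symmetry; apply H2, H1; auto.
    + apply H1, H2; auto.
  - intros [|].
    + exists (fun _ => true); split; [intros; exists 0; auto | auto].
    + exists (fun _ => false); split; [discriminate | intros [n H]; discriminate].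
Defined.

Definition Ospace (Y : rep_space) : rep_space := Cspace Y Sier.

Lemma continuous_comp {X Y Z : rep_space} (f : carrier X -> carrier Y) (g : carrier Y -> carrier Z) :
  continuous f -> continuous g -> continuous (fun x => g (f x)).
Proof.
  intros [a Ha] [b Hb].
  apply continuous_of_realizer with (F := fun p => eta b (eta a p)).
  - apply cont_comp with (E := dom Y).
    + eapply realizes_cont; eauto.
    + eapply realizes_cont; eauto.
    + intros p [x Hx]. exists (f x). apply (realizes_eta a f Ha p x Hx).
  - intros p x Hx. apply (realizes_eta b g Hb). apply (realizes_eta a f Ha p x Hx).
Qed.

Definition ccomp {X Y Z : rep_space} (g : carrier (Cspace Y Z)) (f : carrier (Cspace X Y)) :
  carrier (Cspace X Z) :=
  exist _ (fun x => cval g (cval f x)) (continuous_comp _ _ (proj2_sig f) (proj2_sig g)).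

Definition subspace (X : rep_space) (P : carrier X -> Prop) : rep_space.
Proof.
  refine {| carrier := {x : carrier X | P x}; rep := fun p x => rep X p (proj1_sig x) |}.
  - intros p [x Hx] [y Hy] H1 H2; simpl in *.
    assert (x = y) as -> by (eapply rep_sv; eauto). f_equal; apply proof_irrelevance.
  - intros [x Hx]; apply (rep_surj X x).
Defined.

Record pre_endo : Type := {
  pobj : rep_space -> rep_space;
  pmap : forall X Y : rep_space, carrier (Cspace X Y) -> carrier (pobj X) -> carrier (pobj Y) }.

Record comp_endo : Type := {
  eobj : rep_space -> rep_space;
  emap : forall X Y : rep_space, carrier (Cspace X Y) -> carrier (Cspace (eobj X) (eobj Y));
  emap_id : forall X (i : carrier (Cspace X X)), (forall x, cval i x = x) ->
              forall y, cval (emap X X i) y = y;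
  emap_comp : forall X Y Z (f : carrier (Cspace X Y)) (g : carrier (Cspace Y Z))
                (h : carrier (Cspace X Z)), (forall x, cval h x = cval g (cval f x)) ->
              forall y, cval (emap X Z h) y = cval (emap Y Z g) (cval (emap X Y f) y);
  emap_computable : forall X Y, @computable (Cspace X Y) (Cspace (eobj X) (eobj Y)) (emap X Y) }.

Definition endo_of (d : comp_endo) : pre_endo :=
  {| pobj := eobj d; pmap := fun X Y f y => cval (emap d X Y f) y |}.

Definition kappa (e : pre_endo) (Y : rep_space) (y : carrier (pobj e Y))
  (U : carrier (Ospace Y)) : carrier (pobj e Sier) := pmap e Y Sier U y.

Definition kimage (e : pre_endo) (Y : rep_space) : rep_space :=
  subspace (Cspace (Ospace Y) (pobj e Sier))
    (fun phi => exists y, forall U, cval phi U = kappa e Y y U).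

Definition admissible (e : pre_endo) (Y : rep_space) : Prop :=
  (forall y1 y2, (forall U, kappa e Y y1 U = kappa e Y y2 U) -> y1 = y2) /\
  exists g : carrier (kimage e Y) -> carrier (pobj e Y),
    computable g /\
    forall (phi : carrier (kimage e Y)) y,
      (forall U, cval (proj1_sig phi) U = kappa e Y y U) -> g phi = y.

Lemma kappa_continuous (d : comp_endo) (Y : rep_space) (z : carrier (eobj d Y)) :
  @continuous (Ospace Y) (eobj d Sier) (kappa (endo_of d) Y z).
Proof.
  destruct (emap_computable d Y Sier) as [Q [_ HQ]].
  destruct (rep_surj _ z) as [p Hp].
  apply continuous_of_realizer with (F := fun u => eta (eta Q u) p).
  - apply cont_comp with (E := fun w => exists r, assoc w p r) (F := eta Q) (G := fun w => eta w p).
    + eapply realizes_cont; eauto.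
    + apply eta_cont_assoc.
    + intros u [U HU]. destruct (realizes_eta Q _ HQ u U HU) as [_ H].
      destruct (H p z Hp) as [r [Hr _]]. eauto.
  - intros u U HU. destruct (realizes_eta Q _ HQ u U HU) as [_ H].
    apply (realizes_eta _ _ H p z Hp).
Qed.

Lemma kact_eq (d : comp_endo) (X Z : rep_space) (f : carrier (Cspace X Z))
  (phi : carrier (kimage (endo_of d) X)) : exists y,
  (fun V : carrier (Ospace Z) => cval (proj1_sig phi) (ccomp V f)) = kappa (endo_of d) Z y.
Proof.
  destruct phi as [phi [y Hy]]; simpl. exists (cval (emap d X Z f) y).
  apply functional_extensionality; intro V. rewrite Hy. unfold kappa; simpl.
  apply emap_comp. reflexivity.
Qed.

Lemma kact_cont (d : comp_endo) (X Z : rep_space) (f : carrier (Cspace X Z))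
  (phi : carrier (kimage (endo_of d) X)) :
  continuous (fun V : carrier (Ospace Z) => cval (proj1_sig phi) (ccomp V f)).
Proof.
  destruct (kact_eq d X Z f phi) as [y E]. assert (H := kappa_continuous d Z y). simpl in E. rewrite <- E in H. exact H.
Qed.

Lemma kact_img (d : comp_endo) (X Z : rep_space) (f : carrier (Cspace X Z))
  (phi : carrier (kimage (endo_of d) X)) :
  exists y, forall V : carrier (Ospace Z),
    cval (Y := pobj (endo_of d) Sier) (exist _ _ (kact_cont d X Z f phi)) V = kappa (endo_of d) Z y V.
Proof.
  destruct (kact_eq d X Z f phi) as [y E]. exists y; intro V.
  exact (f_equal (fun g => g V) E).
Qed.

Definition kact (d : comp_endo) (X Z : rep_space) (f : carrier (Cspace X Z))
  (phi : carrier (kimage (endo_of d) X)) : carrier (kimage (endo_of d) Z) :=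
  exist _ (exist _ (fun V : carrier (Ospace Z) => cval (proj1_sig phi) (ccomp V f))
                   (kact_cont d X Z f phi))
          (kact_img d X Z f phi).

Definition kappa_endo (d : comp_endo) : pre_endo :=
  {| pobj := kimage (endo_of d); pmap := kact d |}.

(* Main.v *)
Require Import Defs.
From Stdlib Require Import Arith Lia List Cantor ClassicalEpsilon FunctionalExtensionality ProofIrrelevance.
Import ListNotations.

Definition PR (k : nat) (f : list nat -> nat) : Prop :=
  exists c, forall xs, length xs = k -> peval c xs (f xs).

Lemma PR_ext k f g : PR k f -> (forall xs, length xs = k -> f xs = g xs) -> PR k g.
Proof. intros [c Hc] E; exists c; intros xs Hl; rewrite <- E by auto; auto. Qed.

Lemma PR_var k i : i < k -> PR k (fun xs => nth i xs 0).
Proof. intros H; exists (pProj i); intros xs Hl; constructor; lia. Qed.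

Lemma PR_zero k : PR k (fun _ => 0).
Proof. exists pZero; intros; constructor. Qed.

Lemma PR_list k gs : Forall (fun g => PR k g) gs ->
  exists cs, forall xs, length xs = k -> pevals cs xs (map (fun g => g xs) gs).
Proof.
  induction 1 as [|g gs [c Hc] _ [cs Hcs]].
  - exists []; intros; constructor.
  - exists (c :: cs); intros; simpl; constructor; auto.
Qed.

Lemma PR_comp k m h gs : PR m h -> Forall (fun g => PR k g) gs -> length gs = m ->
  PR k (fun xs => h (map (fun g => g xs) gs)).
Proof.
  intros [ch Hh] HF Hl. destruct (PR_list k gs HF) as [cs Hcs].
  exists (pComp ch cs); intros xs Hx. econstructor; [apply Hcs; auto|].
  apply Hh. rewrite length_map; auto.
Qed.

Lemma PR_S k f : PR k f -> PR k (fun xs => S (f xs)).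
Proof.
  intros [c Hc]; exists (pComp pSucc [c]); intros xs Hx.
  econstructor; [constructor; [apply Hc; auto|constructor]|constructor].
Qed.

Lemma PR_const k c : PR k (fun _ => c).
Proof. induction c; [apply PR_zero|apply PR_S; auto]. Qed.

Lemma PR_prec k b s : PR k b -> PR (S (S k)) s ->
  PR (S k) (fun xs => nat_rec (fun _ => nat) (b (tl xs)) (fun i r => s (i :: r :: tl xs)) (hd 0 xs)).
Proof.
  intros [cb Hb] [cs Hs]; exists (pPrec cb cs); intros [|n xs] Hx; simpl in Hx; [lia|].
  simpl. induction n as [|n IH].
  - constructor; apply Hb; lia.
  - econstructor; [apply IH|]. apply Hs; simpl; lia.
Qed.

Lemma map_nth_seq (xs : list nat) : map (fun i => nth i xs 0) (seq 0 (length xs)) = xs.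
Proof.
  induction xs as [|x xs IH]; auto. simpl. f_equal.
  rewrite <- seq_shift, map_map. simpl. exact IH.
Qed.

Lemma PR_rec k b s n : PR k b -> PR (S (S k)) s -> PR k n ->
  PR k (fun xs => nat_rec (fun _ => nat) (b xs) (fun i r => s (i :: r :: xs)) (n xs)).
Proof.
  intros Hb Hs Hn.
  assert (H := PR_comp k (S k) _ (n :: map (fun i xs => nth i xs 0) (seq 0 k)) (PR_prec k b s Hb Hs)).
  eapply PR_ext; [apply H|].
  - constructor; auto. apply Forall_map, Forall_forall; intros i Hi%in_seq. apply PR_var; lia.
  - simpl; rewrite length_map, length_seq; auto.
  - intros xs Hx. simpl. rewrite map_map. rewrite <- Hx, map_nth_seq. reflexivity.
Qed.

Lemma PR_rec' k B (St : list nat -> nat -> nat -> nat) N : PR k B ->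
  PR (S (S k)) (fun ys => St (tl (tl ys)) (hd 0 ys) (hd 0 (tl ys))) -> PR k N ->
  PR k (fun xs => nat_rec (fun _ => nat) (B xs) (St xs) (N xs)).
Proof. intros HB HS HN. exact (PR_rec k B (fun ys => St (tl (tl ys)) (hd 0 ys) (hd 0 (tl ys))) N HB HS HN). Qed.

Definition PR1 f := PR 1 (fun xs => f (nth 0 xs 0)).
Definition PR2 f := PR 2 (fun xs => f (nth 0 xs 0) (nth 1 xs 0)).
Definition PR3 f := PR 3 (fun xs => f (nth 0 xs 0) (nth 1 xs 0) (nth 2 xs 0)).
Definition PR4 f := PR 4 (fun xs => f (nth 0 xs 0) (nth 1 xs 0) (nth 2 xs 0) (nth 3 xs 0)).

Lemma PR_app1 f k a : PR1 f -> PR k a -> PR k (fun xs => f (a xs)).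
Proof. intros Hf Ha. eapply PR_ext; [apply (PR_comp k 1 _ [a] Hf)|]; auto. Qed.
Lemma PR_app2 f k a b : PR2 f -> PR k a -> PR k b -> PR k (fun xs => f (a xs) (b xs)).
Proof. intros Hf Ha Hb. eapply PR_ext; [apply (PR_comp k 2 _ [a;b] Hf)|]; auto. Qed.
Lemma PR_app3 f k a b c : PR3 f -> PR k a -> PR k b -> PR k c -> PR k (fun xs => f (a xs) (b xs) (c xs)).
Proof. intros Hf Ha Hb Hc. eapply PR_ext; [apply (PR_comp k 3 _ [a;b;c] Hf)|]; auto. Qed.
Lemma PR_app4 f k a b c d : PR4 f -> PR k a -> PR k b -> PR k c -> PR k d ->
  PR k (fun xs => f (a xs) (b xs) (c xs) (d xs)).
Proof. intros Hf Ha Hb Hc Hd. eapply PR_ext; [apply (PR_comp k 4 _ [a;b;c;d] Hf)|]; auto 6. Qed.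

Lemma PR_tl k i T : PR k (fun ys => nth (S i) (T ys) 0) -> PR k (fun ys => nth i (tl (T ys)) 0).
Proof. intro H; eapply PR_ext; [exact H|]. intros ys _; cbv beta; destruct (T ys); [destruct i|]; reflexivity. Qed.
Lemma PR_hd k T : PR k (fun ys => nth 0 (T ys) 0) -> PR k (fun ys => hd 0 (T ys)).
Proof. intro H; eapply PR_ext; [exact H|]. intros ys _; cbv beta; destruct (T ys); reflexivity. Qed.

Lemma PR1_S : PR1 S. Proof. apply PR_S, PR_var; lia. Qed.

Create HintDb prdb.
#[export] Hint Resolve PR1_S : prdb.

Ltac pr :=
  lazymatch goal with
  | |- PR _ (fun _ => ?c) => apply PR_const
  | |- PR ?k ?f =>
  first
  [ lazymatch f with (fun _ => _) => fail | _ => change (PR k (fun xs => f xs)); pr end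
  | match goal with |- PR _ (fun ys => nth _ ys 0) => apply PR_var; lia end
  | match goal with |- PR _ (fun ys => nth _ (tl (@?T ys)) 0) => apply PR_tl; cbv beta; pr end
  | match goal with |- PR _ (fun ys => hd 0 (@?T ys)) => apply PR_hd; cbv beta; pr end
  | match goal with |- PR _ (fun xs => nat_rec (fun _ => nat) (@?B xs) (@?St xs) (@?N xs)) =>
      apply (PR_rec' _ B St N); [pr | cbv beta; pr | pr] end
  | match goal with |- PR _ (fun xs => ?f (@?a xs) (@?b xs) (@?c xs) (@?d xs)) =>
      apply (PR_app4 f); [solve [auto with prdb] | pr | pr | pr | pr] end
  | match goal with |- PR _ (fun xs => ?f (@?a xs) (@?b xs) (@?c xs)) =>
      apply (PR_app3 f); [solve [auto with prdb] | pr | pr | pr] end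
  | match goal with |- PR _ (fun xs => ?f (@?a xs) (@?b xs)) =>
      apply (PR_app2 f); [solve [auto with prdb] | pr | pr] end
  | match goal with |- PR _ (fun xs => ?f (@?a xs)) =>
      apply (PR_app1 f); [solve [auto with prdb] | pr] end ]
  end.

Definition addn' x y := nat_rec (fun _ => nat) y (fun _ r => S r) x.
Lemma PR2_add : PR2 Nat.add.
Proof.
  eapply PR_ext with (f := fun xs => addn' (nth 0 xs 0) (nth 1 xs 0)).
  - unfold addn'. pr.
  - intros xs _. unfold addn'. induction (nth 0 xs 0); simpl; auto.
Qed.
#[export] Hint Resolve PR2_add : prdb.

Definition ifz (c a b : nat) : nat := match c with 0 => a | S _ => b end.
Lemma PR3_ifz : PR3 ifz.
Proof.
  eapply PR_ext with (f := fun xs => nat_rec (fun _ => nat) (nth 1 xs 0) (fun _ _ => nth 2 xs 0) (nth 0 xs 0)).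
  - pr.
  - intros xs _. destruct (nth 0 xs 0); reflexivity.
Qed.
#[export] Hint Resolve PR3_ifz : prdb.

Lemma PR2_sub : PR2 Nat.sub.
Proof.
  eapply PR_ext with (f := fun xs => nat_rec (fun _ => nat) (nth 0 xs 0)
       (fun _ r => nat_rec (fun _ => nat) 0 (fun i _ => i) r) (nth 1 xs 0)).
  - pr.
  - intros xs _. cbv beta. induction (nth 1 xs 0) as [|n IH]. simpl; lia.
    simpl. rewrite IH. rewrite Nat.sub_succ_r. generalize (nth 0 xs 0 - n); intros [|]; reflexivity.
Qed.
#[export] Hint Resolve PR2_sub : prdb.

Lemma PR1_pred : PR1 Nat.pred.
Proof. eapply PR_ext with (f := fun xs => nth 0 xs 0 - 1). pr. intros; lia. Qed.
#[export] Hint Resolve PR1_pred : prdb.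

Definition ltn x y := ifz (y - x) 0 1.
Definition eqn x y := ifz ((x - y) + (y - x)) 1 0.
Definition andn x y := ifz x 0 (ifz y 0 1).
Lemma PR2_ltn : PR2 ltn. Proof. unfold PR2, ltn. pr. Qed.
Lemma PR2_eqn : PR2 eqn. Proof. unfold PR2, eqn. pr. Qed.
Lemma PR2_andn : PR2 andn. Proof. unfold PR2, andn. pr. Qed.
#[export] Hint Resolve PR2_ltn PR2_eqn PR2_andn : prdb.

Lemma ltn_t x y : x < y -> ltn x y = 1.
Proof. unfold ltn; intros; destruct (y - x) eqn:E; [lia|reflexivity]. Qed.
Lemma ltn_f x y : y <= x -> ltn x y = 0.
Proof. unfold ltn; intros; replace (y - x) with 0 by lia; reflexivity. Qed.
Lemma ltn_le1 x y : ltn x y <= 1.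
Proof. unfold ltn; destruct (y - x); simpl; lia. Qed.
Lemma ltn_pos x y : ltn x y <> 0 -> x < y.
Proof. intros H. destruct (Nat.lt_ge_cases x y); auto. rewrite ltn_f in H; auto; lia. Qed.
Lemma eqn_t x : eqn x x = 1.
Proof. unfold eqn; rewrite Nat.sub_diag; reflexivity. Qed.
Lemma eqn_f x y : x <> y -> eqn x y = 0.
Proof. unfold eqn; intros; destruct (x - y + (y - x)) eqn:E; [lia|reflexivity]. Qed.
Lemma eqn_pos x y : eqn x y <> 0 -> x = y.
Proof. intros H. destruct (Nat.eq_dec x y); auto. rewrite eqn_f in H; auto; lia. Qed.
Lemma andn_pos x y : andn x y <> 0 <-> x <> 0 /\ y <> 0.
Proof. unfold andn; destruct x, y; simpl; split; intuition; lia. Qed.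

Definition mod2 x := nat_rec (fun _ => nat) 0 (fun _ r => ifz r 1 0) x.
Definition div2 x := nat_rec (fun _ => nat) 0 (fun i r => r + mod2 i) x.
Lemma PR1_mod2 : PR1 mod2. Proof. unfold PR1, mod2. pr. Qed.
#[export] Hint Resolve PR1_mod2 : prdb.
Lemma PR1_div2 : PR1 div2. Proof. unfold PR1, div2. pr. Qed.
#[export] Hint Resolve PR1_div2 : prdb.

Lemma mod2_SS n : mod2 (S (S n)) = mod2 n.
Proof.
  assert (H : mod2 n = 0 \/ mod2 n = 1).
  { induction n; [auto|]. simpl. change (nat_rec _ _ _ n) with (mod2 n). destruct IHn as [-> | ->]; auto. }
  change (mod2 (S (S n))) with (ifz (ifz (mod2 n) 1 0) 1 0). destruct H as [-> | ->]; reflexivity.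
Qed.
Lemma div2_SS n : div2 (S (S n)) = S (div2 n).
Proof.
  change (div2 (S (S n))) with (div2 n + mod2 n + mod2 (S n)).
  change (mod2 (S n)) with (ifz (mod2 n) 1 0).
  assert (H : mod2 n = 0 \/ mod2 n = 1).
  { induction n; [auto|]. simpl. change (nat_rec _ _ _ n) with (mod2 n). destruct IHn as [-> | ->]; auto. }
  destruct H as [-> | ->]; simpl; lia.
Qed.
Lemma mod2_eq a b : b <= 1 -> mod2 (2 * a + b) = b.
Proof.
  intros Hb; induction a. simpl. destruct b as [|[|]]; simpl; auto; lia.
  replace (2 * S a + b) with (S (S (2 * a + b))) by lia. rewrite mod2_SS; auto.
Qed.
Lemma div2_eq a b : b <= 1 -> div2 (2 * a + b) = a.
Proof.
  intros Hb; induction a. simpl. destruct b as [|[|]]; simpl; auto; lia.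
  replace (2 * S a + b) with (S (S (2 * a + b))) by lia. rewrite div2_SS; auto.
Qed.

Definition tri n := nat_rec (fun _ => nat) 0 (fun i m => S i + m) n.
Definition tonat x y := y + tri (y + x).
Lemma tonat_eq x y : tonat x y = to_nat (x, y).
Proof. reflexivity. Qed.
Lemma PR1_tri : PR1 tri. Proof. unfold PR1, tri. pr. Qed.
#[export] Hint Resolve PR1_tri : prdb.
Lemma PR2_tonat : PR2 tonat. Proof. unfold PR2, tonat. pr. Qed.
#[export] Hint Resolve PR2_tonat : prdb.

Lemma tri_mono a b : a <= b -> tri a <= tri b.
Proof. induction 1; auto. simpl. change (nat_rec _ _ _ m) with (tri m). lia. Qed.
Lemma tonat_mono x y x' y' : x <= x' -> y <= y' -> tonat x y <= tonat x' y'.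
Proof. unfold tonat; intros. pose proof (tri_mono (y + x) (y' + x')). lia. Qed.
Lemma tonat_ge x y : x <= tonat x y /\ y <= tonat x y.
Proof. rewrite tonat_eq. pose proof (to_nat_non_decreasing x y). lia. Qed.
Lemma tonat_inj x y x' y' : tonat x y = tonat x' y' -> x = x' /\ y = y'.
Proof. rewrite !tonat_eq; intros H%Cantor.to_nat_inj. injection H; auto. Qed.

Definition mu (P : nat -> nat) (n : nat) : nat :=
  nat_rec (fun _ => nat) 0 (fun i r => ifz (ltn r i) (ifz (P i) (S i) i) r) n.

Lemma PR_mu k (P : list nat -> nat -> nat) N :
  PR (S (S k)) (fun ys => ifz (ltn (hd 0 (tl ys)) (hd 0 ys)) (ifz (P (tl (tl ys)) (hd 0 ys)) (S (hd 0 ys)) (hd 0 ys)) (hd 0 (tl ys))) ->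
  PR k N -> PR k (fun xs => mu (P xs) (N xs)).
Proof. intros H1 H2. unfold mu. exact (PR_rec' k (fun _ => 0) _ N (PR_const k 0) H1 H2). Qed.

Lemma mu_spec P n : (mu P n = n /\ forall z, z < n -> P z = 0) \/
  (mu P n < n /\ P (mu P n) <> 0 /\ forall z, z < mu P n -> P z = 0).
Proof.
  induction n as [|n IH].
  - left; split; [reflexivity|intros; lia].
  - change (mu P (S n)) with (ifz (ltn (mu P n) n) (ifz (P n) (S n) n) (mu P n)).
    destruct IH as [[E H]|[L [H1 H2]]].
    + rewrite E, ltn_f by lia. simpl. destruct (P n) eqn:EP; simpl.
      * left; split; auto. intros z Hz. destruct (Nat.eq_dec z n); subst; auto. apply H; lia.
      * right; split; [lia|split]; [rewrite EP; discriminate|auto].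
    + rewrite ltn_t by auto. simpl. right; split; [lia|auto].
Qed.

Lemma mu_eq P n x : x < n -> P x <> 0 -> (forall z, z < x -> P z = 0) -> mu P n = x.
Proof.
  intros Hx Px Hz. destruct (mu_spec P n) as [[E H]|[L [H1 H2]]].
  - exfalso; apply Px, H; auto.
  - destruct (Nat.lt_trichotomy (mu P n) x) as [Hl|[Hl|Hl]]; auto.
    + exfalso; apply H1, Hz; auto.
    + exfalso; apply Px, H2; auto.
Qed.
Lemma mu_none P n : (forall z, z < n -> P z = 0) -> mu P n = n.
Proof.
  intros H. destruct (mu_spec P n) as [[E _]|[L [H1 H2]]]; auto.
  exfalso; apply H1, H; auto.
Qed.
Lemma mu_ext P Q n : (forall z, z < n -> P z = Q z) -> mu P n = mu Q n.
Proof.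
  intros E. induction n as [|n IH]; auto.
  change (mu P (S n)) with (ifz (ltn (mu P n) n) (ifz (P n) (S n) n) (mu P n)).
  change (mu Q (S n)) with (ifz (ltn (mu Q n) n) (ifz (Q n) (S n) n) (mu Q n)).
  rewrite IH by (intros; apply E; lia). rewrite E by lia. reflexivity.
Qed.

Ltac pr2 :=
  lazymatch goal with
  | |- PR _ (fun xs => mu (@?P xs) (@?N xs)) => apply (PR_mu _ P N); [cbv beta; pr2 | pr2]
  | |- PR _ (fun _ => ?c) => apply PR_const
  | |- PR ?k ?f =>
  first
  [ lazymatch f with (fun _ => _) => fail | _ => change (PR k (fun xs => f xs)); pr2 end
  | match goal with |- PR _ (fun ys => nth _ ys 0) => apply PR_var; lia end
  | match goal with |- PR _ (fun ys => nth _ (tl (@?T ys)) 0) => apply PR_tl; cbv beta; pr2 end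
  | match goal with |- PR _ (fun ys => hd 0 (@?T ys)) => apply PR_hd; cbv beta; pr2 end
  | match goal with |- PR _ (fun xs => nat_rec (fun _ => nat) (@?B xs) (@?St xs) (@?N xs)) =>
      apply (PR_rec' _ B St N); [pr2 | cbv beta; pr2 | pr2] end
  | match goal with |- PR _ (fun xs => ?f (@?a xs) (@?b xs) (@?c xs) (@?d xs)) =>
      apply (PR_app4 f); [solve [auto with prdb] | pr2 | pr2 | pr2 | pr2] end
  | match goal with |- PR _ (fun xs => ?f (@?a xs) (@?b xs) (@?c xs)) =>
      apply (PR_app3 f); [solve [auto with prdb] | pr2 | pr2 | pr2] end
  | match goal with |- PR _ (fun xs => ?f (@?a xs) (@?b xs)) =>
      apply (PR_app2 f); [solve [auto with prdb] | pr2 | pr2] end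
  | match goal with |- PR _ (fun xs => ?f (@?a xs)) =>
      apply (PR_app1 f); [solve [auto with prdb] | pr2] end ]
  end.

Definition pfst m := mu (fun x => ltn (mu (fun y => eqn (tonat x y) m) (S m)) (S m)) (S m).
Definition psnd m := mu (fun y => eqn (tonat (pfst m) y) m) (S m).
Lemma PR1_pfst : PR1 pfst. Proof. unfold PR1, pfst. pr2. Qed.
#[export] Hint Resolve PR1_pfst : prdb.
Lemma PR1_psnd : PR1 psnd. Proof. unfold PR1, psnd. pr2. Qed.
#[export] Hint Resolve PR1_psnd : prdb.

Lemma pfst_eq x y : pfst (tonat x y) = x.
Proof.
  unfold pfst. set (m := tonat x y). destruct (tonat_ge x y) as [H1 H2].
  assert (Hy : forall x', mu (fun y0 => eqn (tonat x' y0) m) (S m) = if Nat.eq_dec x' x then y else S m).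
  { intros x'. destruct (Nat.eq_dec x' x) as [->|n].
    - apply mu_eq; [lia| rewrite eqn_t; lia|]. intros z Hz. apply eqn_f. intros E%tonat_inj; lia.
    - apply mu_none. intros z _. apply eqn_f. intros E%tonat_inj; lia. }
  apply mu_eq; [lia| |].
  - rewrite Hy. destruct Nat.eq_dec; [|congruence]. rewrite ltn_t; lia.
  - intros z Hz. rewrite Hy. destruct Nat.eq_dec; [lia|]. apply ltn_f; lia.
Qed.
Lemma psnd_eq x y : psnd (tonat x y) = y.
Proof.
  unfold psnd. rewrite pfst_eq. destruct (tonat_ge x y) as [H1 H2].
  apply mu_eq; [lia| rewrite eqn_t; lia|]. intros z Hz. apply eqn_f. intros E%tonat_inj; lia.
Qed.

Definition b2n (b : bool) : nat := if b then 1 else 0.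
Definition idxn n c b := tonat (tonat n c) b.
Lemma PR3_idxn : PR3 idxn. Proof. unfold PR3, idxn. pr2. Qed.
#[export] Hint Resolve PR3_idxn : prdb.
Lemma idx_idxn n w b : idx n w b = idxn n (code w) (b2n b).
Proof. reflexivity. Qed.
Lemma idxn_mono n c b n' c' b' : n <= n' -> c <= c' -> b <= b' -> idxn n c b <= idxn n' c' b'.
Proof. intros. unfold idxn. apply tonat_mono; auto. apply tonat_mono; auto. Qed.

Lemma div_mod2 n : n = 2 * div2 n + mod2 n /\ mod2 n <= 1.
Proof.
  induction n as [|n [IH1 IH2]]; [simpl; lia|].
  change (div2 (S n)) with (div2 n + mod2 n). change (mod2 (S n)) with (ifz (mod2 n) 1 0).
  destruct (mod2 n) as [|[|]] eqn:E; simpl; lia.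
Qed.

Lemma code_surj c : exists w, code w = c.
Proof.
  induction c as [c IH] using lt_wf_ind. destruct c as [|c]; [exists []; auto|].
  destruct (div_mod2 c) as [H1 H2].
  destruct (IH (div2 c)) as [w Hw]; [lia|].
  exists ((mod2 c =? 1) :: w). simpl. rewrite Hw. destruct (mod2 c) as [|[|]]; simpl; lia.
Qed.

Definition tlp j c := nat_rec (fun _ => nat) c (fun _ r => div2 (pred r)) j.
Definition nthc j c := mod2 (pred (tlp j c)).
Definition lenc c := nat_rec (fun _ => nat) 0 (fun i r => r + ifz (tlp i c) 0 1) c.
Lemma PR2_tlp : PR2 tlp. Proof. unfold PR2, tlp. pr2. Qed.
#[export] Hint Resolve PR2_tlp : prdb.
Lemma PR2_nthc : PR2 nthc. Proof. unfold PR2, nthc. pr2. Qed.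
#[export] Hint Resolve PR2_nthc : prdb.
Lemma PR1_lenc : PR1 lenc. Proof. unfold PR1, lenc. pr2. Qed.
#[export] Hint Resolve PR1_lenc : prdb.

Lemma code_cons b w : code (b :: w) = 2 * code w + 1 + b2n b.
Proof. simpl. destruct b; simpl; lia. Qed.
Lemma pred_code_cons b w : pred (code (b :: w)) = 2 * code w + b2n b.
Proof. rewrite code_cons. lia. Qed.
Lemma b2n_le b : b2n b <= 1. Proof. destruct b; simpl; lia. Qed.

Lemma tlp_code j w : tlp j (code w) = code (skipn j w).
Proof.
  revert w; induction j as [|j IH]; intros w; [reflexivity|].
  change (tlp (S j) (code w)) with (div2 (pred (tlp j (code w)))). rewrite IH.
  destruct (skipn j w) as [|b w'] eqn:E.
  - apply skipn_all_iff in E. rewrite (skipn_all2 (n := S j) w) by lia. reflexivity.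
  - rewrite pred_code_cons, div2_eq by apply b2n_le.
    replace (S j) with (1 + j) by lia. rewrite <- skipn_skipn, E. reflexivity.
Qed.

Lemma nthc_code j w : nthc j (code w) = b2n (nth j w false).
Proof.
  unfold nthc. rewrite tlp_code. revert j; induction w as [|b w IH]; intros j.
  - rewrite skipn_nil. destruct j; reflexivity.
  - destruct j as [|j].
    + simpl skipn. rewrite pred_code_cons, mod2_eq by apply b2n_le. reflexivity.
    + simpl. apply IH.
Qed.

Lemma length_le_code w : length w <= code w.
Proof. induction w as [|b w IH]; [simpl; lia|]. rewrite code_cons; simpl; lia. Qed.
Lemma code_zero w : code w = 0 -> w = [].
Proof. destruct w as [|b w]; auto. rewrite code_cons; lia. Qed.

Definition lenc_aux c N := nat_rec (fun _ => nat) 0 (fun i r => r + ifz (tlp i c) 0 1) N.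
Lemma lenc_aux_S c N : lenc_aux c (S N) = lenc_aux c N + ifz (tlp N c) 0 1.
Proof. reflexivity. Qed.
Lemma lenc_code w : lenc (code w) = length w.
Proof.
  change (lenc (code w)) with (lenc_aux (code w) (code w)).
  assert (H : forall N, lenc_aux (code w) N = min N (length w)).
  { induction N as [|N IH]; [reflexivity|]. rewrite lenc_aux_S, IH, tlp_code. destruct (code (skipn N w)) eqn:E; cbn [ifz].
    - apply code_zero, skipn_all_iff in E. lia.
    - assert (N < length w). { destruct (Nat.lt_ge_cases N (length w)); auto. rewrite (skipn_all2 (n := N) w) in E by lia. discriminate. } lia. }
  rewrite H. pose proof (length_le_code w). lia.
Qed.

Definition pcode (o : nat -> nat) k := nat_rec (fun _ => nat) 0 (fun i r => r + r + S (o (k - S i))) k.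

Definition pc_aux (o : nat -> nat) k i := nat_rec (fun _ => nat) 0 (fun i r => r + r + S (o (k - S i))) i.
Lemma pc_aux_S o k i : pc_aux o k (S i) = pc_aux o k i + pc_aux o k i + S (o (k - S i)).
Proof. reflexivity. Qed.

Lemma pcode_spec (p : Cantor) o k : (forall j, j < k -> o j = b2n (p j)) -> pcode o k = code (prefix p k).
Proof.
  intros Ho. change (pcode o k) with (pc_aux o k k). unfold prefix.
  assert (H : forall i, i <= k -> pc_aux o k i = code (map p (seq (k - i) i))).
  { induction i as [|i IH]; intros Hi; [reflexivity|]. rewrite pc_aux_S.
    rewrite IH by lia. replace (k - i) with (S (k - S i)) by lia. simpl (seq _ (S i)). rewrite map_cons, code_cons, Ho by lia. lia. }
  rewrite H by lia. rewrite Nat.sub_diag. reflexivity.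
Qed.

Lemma pcode_ext o o' k : (forall j, j < k -> o j = o' j) -> pcode o k = pcode o' k.
Proof.
  intros E. change (pc_aux o k k = pc_aux o' k k).
  assert (H : forall i, i <= k -> pc_aux o k i = pc_aux o' k i).
  { induction i as [|i IH]; intros Hi; [reflexivity|]. rewrite !pc_aux_S. rewrite IH by lia. rewrite E by lia. reflexivity. }
  apply H; lia.
Qed.

Lemma nth_prefix (p : Cantor) K j : j < K -> nth j (prefix p K) false = p j.
Proof.
  intros H. unfold prefix. rewrite nth_indep with (d' := p 0) by (rewrite length_map, length_seq; auto).
  rewrite map_nth, seq_nth; auto.
Qed.

Lemma list_prefix (w : list bool) : prefix (fun j => nth j w false) (length w) = w.
Proof.
  unfold prefix. induction w as [|b w IH]; auto. simpl. f_equal.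
  rewrite <- seq_shift, map_map. simpl. exact IH.
Qed.

Lemma code_app_le w b : code w <= code (w ++ [b]).
Proof. induction w as [|x w IH]; simpl; [lia|]. destruct x; lia. Qed.

Lemma code_prefix_mono p k L : k <= L -> code (prefix p k) <= code (prefix p L).
Proof.
  induction 1; auto. unfold prefix in *. rewrite seq_S, map_app. simpl.
  pose proof (code_app_le (map p (seq 0 m)) (p m)). lia.
Qed.

Definition fcode k w := pcode (fun j => nthc j w) k.
Lemma PR2_fcode : PR2 fcode. Proof. unfold PR2, fcode, pcode. pr2. Qed.
#[export] Hint Resolve PR2_fcode : prdb.

Lemma fcode_prefix u K k : k <= K -> fcode k (code (prefix u K)) = code (prefix u k).
Proof.
  intros Hk. unfold fcode. apply pcode_spec. intros j Hj. rewrite nthc_code, nth_prefix; auto; lia.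
Qed.

Lemma fcode_le k w : k <= lenc w -> fcode k w <= w.
Proof.
  intros Hk. destruct (code_surj w) as [w' <-]. rewrite lenc_code in Hk.
  assert (H : fcode k (code (prefix (fun j => nth j w' false) (length w'))) <= code (prefix (fun j => nth j w' false) (length w'))).
  { rewrite fcode_prefix by auto. apply code_prefix_mono; auto. }
  rewrite list_prefix in H. exact H.
Qed.

Definition i0n m := ifz (psnd m) (ltn (pfst (pfst m)) (lenc (psnd (pfst m)))) (nthc (pfst (pfst m)) (psnd (pfst m))).
Lemma PR1_i0n : PR1 i0n. Proof. unfold PR1, i0n. pr2. Qed.
#[export] Hint Resolve PR1_i0n : prdb.
Definition i0 : Cantor := fun m => Nat.eqb (i0n m) 1.
Lemma i0n_le m : i0n m <= 1.
Proof.
  unfold i0n. destruct (psnd m); simpl. apply ltn_le1.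
  unfold nthc. pose proof (div_mod2 (pred (tlp (pfst (pfst m)) (psnd (pfst m))))). lia.
Qed.
Lemma b2n_i0 m : b2n (i0 m) = i0n m.
Proof. unfold i0. pose proof (i0n_le m). destruct (i0n m) as [|[|]]; simpl; auto; lia. Qed.

Definition i0code k := pcode i0n k.
Lemma PR1_i0code : PR1 i0code. Proof. unfold PR1, i0code, pcode. pr2. Qed.
#[export] Hint Resolve PR1_i0code : prdb.
Lemma i0code_eq k : i0code k = code (prefix i0 k).
Proof. apply pcode_spec. intros; rewrite b2n_i0; auto. Qed.

Lemma i0_assoc p : assoc i0 p p.
Proof.
  intros n. split.
  - exists (S n). unfold i0. rewrite idx_idxn. unfold i0n, idxn. rewrite psnd_eq, !pfst_eq, psnd_eq.
    cbn [b2n ifz]. rewrite lenc_code, prefix_length, ltn_t; auto.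
  - intros k Hk. unfold i0 in *. rewrite idx_idxn in *. unfold i0n, idxn in *.
    rewrite psnd_eq, !pfst_eq, psnd_eq in *. cbn [b2n ifz] in *. rewrite lenc_code, prefix_length in Hk.
    rewrite nthc_code. destruct (Nat.lt_ge_cases n k) as [H|H].
    + rewrite nth_prefix by auto. destruct (p n); reflexivity.
    + rewrite ltn_f in Hk; auto; discriminate.
Qed.

Section Alg.
Variable o : nat -> nat.
Definition Rk w m := mu (fun k => o (idxn m (fcode k w) 0)) (S (lenc w)).
Definition Rn w m := ifz (ltn (Rk w m) (S (lenc w))) 0 (S (o (idxn m (fcode (Rk w m) w) 1))).
Definition Ak w n := mu (fun k => andn (eqn (Rn w (idxn n (i0code k) 0)) 2) (Rn w (idxn n (i0code k) 1))) (S (lenc w)).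
Definition adef w n := ltn (Ak w n) (S (lenc w)).
Definition aval w n := pred (Rn w (idxn n (i0code (Ak w n)) 1)).
Definition an m := ifz (psnd m) (adef (psnd (pfst m)) (pfst (pfst m))) (aval (psnd (pfst m)) (pfst (pfst m))).
End Alg.

Definition look v := fun j => nthc j v.
Definition Rkv v w m := Rk (look v) w m.
Definition Rnv v w m := Rn (look v) w m.
Definition Akv v w n := Ak (look v) w n.
Definition adefv v w n := adef (look v) w n.
Definition avalv v w n := aval (look v) w n.
Definition anv v m := an (look v) m.

Lemma PR3_Rkv : PR3 Rkv.
Proof. unfold PR3, Rkv, Rk, look. pr2. Qed.
#[export] Hint Resolve PR3_Rkv : prdb.
Lemma PR3_Rnv : PR3 Rnv.
Proof.
  unfold PR3. eapply PR_ext with (f := fun xs => ifz (ltn (Rkv (nth 0 xs 0) (nth 1 xs 0) (nth 2 xs 0)) (S (lenc (nth 1 xs 0)))) 0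
     (S (nthc (idxn (nth 2 xs 0) (fcode (Rkv (nth 0 xs 0) (nth 1 xs 0) (nth 2 xs 0)) (nth 1 xs 0)) 1) (nth 0 xs 0)))).
  - pr2.
  - intros; reflexivity.
Qed.
#[export] Hint Resolve PR3_Rnv : prdb.
Lemma PR3_Akv : PR3 Akv.
Proof.
  unfold PR3. eapply PR_ext with (f := fun xs => mu (fun k => andn (eqn (Rnv (nth 0 xs 0) (nth 1 xs 0) (idxn (nth 2 xs 0) (i0code k) 0)) 2)
        (Rnv (nth 0 xs 0) (nth 1 xs 0) (idxn (nth 2 xs 0) (i0code k) 1))) (S (lenc (nth 1 xs 0)))).
  - pr2.
  - intros; reflexivity.
Qed.
#[export] Hint Resolve PR3_Akv : prdb.
Lemma PR3_adefv : PR3 adefv.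
Proof.
  unfold PR3. eapply PR_ext with (f := fun xs => ltn (Akv (nth 0 xs 0) (nth 1 xs 0) (nth 2 xs 0)) (S (lenc (nth 1 xs 0)))).
  - pr2.
  - intros; reflexivity.
Qed.
#[export] Hint Resolve PR3_adefv : prdb.
Lemma PR3_avalv : PR3 avalv.
Proof.
  unfold PR3. eapply PR_ext with (f := fun xs => pred (Rnv (nth 0 xs 0) (nth 1 xs 0) (idxn (nth 2 xs 0) (i0code (Akv (nth 0 xs 0) (nth 1 xs 0) (nth 2 xs 0))) 1))).
  - pr2.
  - intros; reflexivity.
Qed.
#[export] Hint Resolve PR3_avalv : prdb.
Lemma PR2_anv : PR2 anv.
Proof.
  unfold PR2. eapply PR_ext with (f := fun xs => ifz (psnd (nth 1 xs 0)) (adefv (nth 0 xs 0) (psnd (pfst (nth 1 xs 0))) (pfst (pfst (nth 1 xs 0))))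
     (avalv (nth 0 xs 0) (psnd (pfst (nth 1 xs 0))) (pfst (pfst (nth 1 xs 0))))).
  - pr2.
  - intros; reflexivity.
Qed.
#[export] Hint Resolve PR2_anv : prdb.

Definition sumf (F : nat -> nat) N := nat_rec (fun _ => nat) 0 (fun i r => r + F i) N.
Lemma sumf_le F N x : x < N -> F x <= sumf F N.
Proof.
  induction N as [|N IH]; intros H; [lia|].
  change (sumf F (S N)) with (sumf F N + F N).
  destruct (Nat.eq_dec x N) as [->|]; [lia|]. specialize (IH ltac:(lia)). lia.
Qed.

Definition Bn n w := sumf (fun i => idxn (idxn n (i0code i) 1) (fcode (S (lenc w)) w) 1) (S (S (lenc w))).
Lemma PR2_Bn : PR2 Bn. Proof. unfold PR2, Bn, sumf. pr2. Qed.
#[export] Hint Resolve PR2_Bn : prdb.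
Definition Bnd m := Bn (pfst (pfst m)) (psnd (pfst m)).
Lemma PR1_Bnd : PR1 Bnd. Proof. unfold PR1, Bnd. pr2. Qed.
#[export] Hint Resolve PR1_Bnd : prdb.

Definition Qn m := ifz (psnd m) (ltn (Bnd (pfst (pfst m))) (lenc (psnd (pfst m)))) (anv (psnd (pfst m)) (pfst (pfst m))).
Lemma PR1_Qn : PR1 Qn. Proof. unfold PR1, Qn. pr2. Qed.

Definition Qseq : Cantor := fun m => Nat.eqb (Qn m) 1.
Lemma Qseq_computable : computable_seq Qseq.
Proof.
  assert (H : PR 1 (fun xs => eqn (Qn (nth 0 xs 0)) 1)).
  { pose proof PR1_Qn. pr2. }
  destruct H as [c Hc]. exists c. intros n. specialize (Hc [n] eq_refl). simpl in Hc.
  unfold Qseq. destruct (Nat.eq_dec (Qn n) 1) as [E|E].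
  - rewrite E in *. rewrite eqn_t in Hc. exact Hc.
  - rewrite eqn_f in Hc by auto. rewrite (proj2 (Nat.eqb_neq _ _) E). exact Hc.
Qed.

Lemma mu_le P n : mu P n <= n.
Proof. destruct (mu_spec P n) as [[E _]|[L _]]; lia. Qed.

Lemma fc_idx u K k m b : k <= K -> idxn m (fcode k (code (prefix u K))) (b2n b) = idx m (prefix u k) b.
Proof. intros; rewrite fcode_prefix; auto. Qed.

Lemma idxn0 n w : idxn n (code w) 0 = idx n w false. Proof. reflexivity. Qed.
Lemma idxn1 n w : idxn n (code w) 1 = idx n w true. Proof. reflexivity. Qed.

Lemma b2n_true b : b2n b <> 0 -> b = true.
Proof. destruct b; simpl; auto; lia. Qed.

Lemma Rn_spec p u r K m : assoc p u r ->
  (Rn (fun j => b2n (p j)) (code (prefix u K)) m = 0 \/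
   Rn (fun j => b2n (p j)) (code (prefix u K)) m = S (b2n (r m))) /\
  (forall k, k <= K -> p (idx m (prefix u k) false) = true -> Rn (fun j => b2n (p j)) (code (prefix u K)) m <> 0).
Proof.
  intros Ha. unfold Rn, Rk. rewrite lenc_code, prefix_length.
  destruct (mu_spec (fun k => b2n (p (idxn m (fcode k (code (prefix u K))) 0))) (S K)) as [[E H]|[L [H1 H2]]].
  - rewrite E, ltn_f by lia. cbn [ifz]. split; [left; auto|].
    intros k Hk Hp. specialize (H k ltac:(lia)). cbv beta in H.
    change 0 with (b2n false) in H at 1. rewrite fc_idx in H by auto. rewrite Hp in H. discriminate.
  - rewrite ltn_t by auto. cbn [ifz]. split; [|intros; discriminate]. right. f_equal.
    set (k0 := mu _ _) in *. cbv beta in H1.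
    change 0 with (b2n false) in H1 at 1. rewrite fc_idx in H1 by lia. apply b2n_true in H1.
    change 1 with (b2n true). rewrite fc_idx by lia.
    destruct (Ha m) as [_ Hv]. rewrite (Hv k0 H1). reflexivity.
Qed.

Lemma a_spec p u r s K n : assoc p u r -> assoc r i0 s ->
  adef (fun j => b2n (p j)) (code (prefix u K)) n <> 0 -> aval (fun j => b2n (p j)) (code (prefix u K)) n = b2n (s n).
Proof.
  intros Ha Hr. unfold adef, aval, Ak. rewrite lenc_code, prefix_length.
  set (o := fun j => b2n (p j)). set (w := code (prefix u K)).
  set (Q := fun k => andn (eqn (Rn o w (idxn n (i0code k) 0)) 2) (Rn o w (idxn n (i0code k) 1))).
  intros Hd. apply ltn_pos in Hd.
  destruct (mu_spec Q (S K)) as [[E _]|[L [H1 H2]]]; [lia|].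
  set (k := mu Q (S K)) in *. unfold Q in H1. apply andn_pos in H1 as [H3 H4].
  apply eqn_pos in H3.
  rewrite i0code_eq in *. rewrite idxn0 in H3. rewrite idxn1 in H4 |- *.
  destruct (Rn_spec p u r K (idx n (prefix i0 k) false) Ha) as [[E1|E1] _]; fold o w in E1; [lia|].
  rewrite E1 in H3.
  assert (Er : r (idx n (prefix i0 k) false) = true) by (destruct (r _); simpl in H3; congruence).
  destruct (Rn_spec p u r K (idx n (prefix i0 k) true) Ha) as [[E2|E2] _]; fold o w in E2; [lia|].
  rewrite E2. simpl. destruct (Hr n) as [_ Hv]. rewrite (Hv k Er). reflexivity.
Qed.

Lemma a_ex p u r s n : assoc p u r -> assoc r i0 s ->
  exists K0, forall K, K0 <= K -> adef (fun j => b2n (p j)) (code (prefix u K)) n <> 0.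
Proof.
  intros Ha Hr. destruct (Hr n) as [[k1 Hk1] Hv].
  destruct (Ha (idx n (prefix i0 k1) false)) as [[j0 Hj0] _].
  destruct (Ha (idx n (prefix i0 k1) true)) as [[j1 Hj1] _].
  exists (k1 + j0 + j1). intros K HK.
  unfold adef, Ak. rewrite lenc_code, prefix_length.
  set (o := fun j => b2n (p j)). set (w := code (prefix u K)).
  set (Q := fun k => andn (eqn (Rn o w (idxn n (i0code k) 0)) 2) (Rn o w (idxn n (i0code k) 1))).
  assert (HQ : Q k1 <> 0).
  { unfold Q. rewrite i0code_eq, idxn0, idxn1. apply andn_pos. split.
    - destruct (Rn_spec p u r K (idx n (prefix i0 k1) false) Ha) as [[E1|E1] H1]; fold o w in E1, H1.
      + exfalso. apply (H1 j0); auto; lia.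
      + rewrite E1, Hk1, eqn_t. lia.
    - destruct (Rn_spec p u r K (idx n (prefix i0 k1) true) Ha) as [_ H1]. apply (H1 j1); auto; lia. }
  destruct (mu_spec Q (S K)) as [[E H]|[L _]].
  - exfalso; apply HQ, H; lia.
  - rewrite ltn_t; auto.
Qed.

Definition areal (p : Cantor) : Cantor := fun m => Nat.eqb (an (fun j => b2n (p j)) m) 1.

Lemma an_idx o n w b : an o (idx n w b) = ifz (b2n b) (adef o (code w) n) (aval o (code w) n).
Proof. unfold an. rewrite idx_idxn. unfold idxn. rewrite psnd_eq, !pfst_eq, psnd_eq. reflexivity. Qed.

Lemma adef_le o w n : adef o w n <= 1.
Proof. apply ltn_le1. Qed.

Lemma core p u r s : assoc p u r -> assoc r i0 s -> assoc (areal p) u s.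
Proof.
  intros Ha Hr n. split.
  - destruct (a_ex p u r s n Ha Hr) as [K0 HK0]. exists K0. unfold areal. rewrite an_idx. cbn [b2n ifz].
    specialize (HK0 K0 (le_n _)). pose proof (adef_le (fun j => b2n (p j)) (code (prefix u K0)) n).
    destruct (adef _ _ _) as [|[|]]; simpl; auto; lia.
  - intros k Hk. unfold areal in *. rewrite an_idx in *. cbn [b2n ifz] in *.
    rewrite (a_spec p u r s k n Ha Hr).
    + destruct (s n); reflexivity.
    + intros E; rewrite E in Hk; discriminate.
Qed.

Lemma nthc_le j w : nthc j w <= 1.
Proof. unfold nthc. pose proof (div_mod2 (pred (tlp j w))). lia. Qed.

Lemma fcode_mono w k k' : k <= k' -> fcode k w <= fcode k' w.
Proof.
  intros H. set (f := fun j => Nat.eqb (nthc j w) 1).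
  assert (Hf : forall j, nthc j w = b2n (f j)).
  { intros j; unfold f. pose proof (nthc_le j w). destruct (nthc j w) as [|[|]]; simpl; auto; lia. }
  unfold fcode. rewrite !(pcode_spec f) by auto. apply code_prefix_mono; auto.
Qed.

Lemma Rn_agree o o' w m : (forall k b, k <= S (lenc w) -> b <= 1 -> o (idxn m (fcode k w) b) = o' (idxn m (fcode k w) b)) ->
  Rn o w m = Rn o' w m.
Proof.
  intros E. unfold Rn. assert (HR : Rk o w m = Rk o' w m).
  { unfold Rk. apply mu_ext. intros z Hz. apply E; lia. }
  rewrite HR. rewrite E; auto. unfold Rk. apply mu_le.
Qed.

Lemma an_agree o o' m : (forall j, j <= Bnd m -> o j = o' j) -> an o m = an o' m.
Proof.
  intros E. unfold an. unfold Bnd in E.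
  set (n := pfst (pfst m)) in *. set (w := psnd (pfst m)) in *.
  assert (HR : forall k2 b2, k2 <= S (lenc w) -> b2 <= 1 -> Rn o w (idxn n (i0code k2) b2) = Rn o' w (idxn n (i0code k2) b2)).
  { intros k2 b2 Hk2 Hb2. apply Rn_agree. intros k b Hk Hb. apply E.
    eapply Nat.le_trans; [|apply (sumf_le _ _ k2); lia]. cbv beta.
    apply idxn_mono; auto. apply idxn_mono; auto. apply fcode_mono; auto. }
  assert (HA : Ak o w n = Ak o' w n).
  { unfold Ak. apply mu_ext. intros z Hz. rewrite !HR by lia. reflexivity. }
  unfold adef, aval. rewrite HA, HR; auto. unfold Ak; apply mu_le.
Qed.

Lemma look_prefix p k j : j < k -> look (code (prefix p k)) j = b2n (p j).
Proof. intros H. unfold look. rewrite nthc_code, nth_prefix; auto. Qed.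

Lemma Q_assoc p : assoc Qseq p (areal p).
Proof.
  intros m. split.
  - exists (S (Bnd m)). unfold Qseq, Qn. rewrite idx_idxn. unfold idxn. rewrite psnd_eq, !pfst_eq, psnd_eq.
    cbn [b2n ifz]. rewrite lenc_code, prefix_length, ltn_t; auto.
  - intros k Hk. unfold Qseq, Qn in *. rewrite idx_idxn in *. unfold idxn in *. rewrite psnd_eq, !pfst_eq, psnd_eq in *.
    cbn [b2n ifz] in *. rewrite lenc_code, prefix_length in Hk.
    assert (Hb : Bnd m < k) by (apply ltn_pos; intros E; rewrite E in Hk; discriminate).
    unfold areal, anv. f_equal. apply an_agree. intros j Hj. apply look_prefix. lia.
Qed.

Lemma sig_eq {A : Type} {P : A -> Prop} (a b : sig P) : proj1_sig a = proj1_sig b -> a = b.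
Proof. destruct a, b; simpl; intros ->; f_equal; apply proof_irrelevance. Qed.

Lemma idS_real : @realizes Sier Sier i0 (fun b => b).
Proof. intros p x Hx. exists p; split; auto. apply i0_assoc. Qed.

Definition idS : carrier (Ospace Sier) := exist _ (fun b => b) (ex_intro _ i0 idS_real).

Lemma ccomp_id (Y : rep_space) (U : carrier (Ospace Y)) : ccomp idS U = U.
Proof. apply sig_eq. reflexivity. Qed.

Section Main.
Variable d : comp_endo.
Variable Y : rep_space.

Definition gfun (x : carrier (kimage (kappa_endo d) Y)) (U : carrier (Ospace Y)) : carrier (eobj d Sier) :=
  cval (proj1_sig (cval (proj1_sig x) U)) idS.

Lemma gfun_eq x y : (forall U, cval (proj1_sig x) U = kappa (kappa_endo d) Y y U) ->
  forall U, gfun x U = cval (proj1_sig y) U.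
Proof.
  intros H U. unfold gfun. rewrite H. simpl. rewrite ccomp_id. reflexivity.
Qed.

Lemma gfun_cont x : @continuous (Ospace Y) (eobj d Sier) (gfun x).
Proof.
  destruct (proj2_sig x) as [y Hy].
  assert (E : gfun x = cval (proj1_sig y)) by (apply functional_extensionality; apply gfun_eq; auto).
  rewrite E. exact (proj2_sig (proj1_sig y)).
Qed.

Lemma gfun_img x : exists y0, forall U, cval (exist _ (gfun x) (gfun_cont x) : carrier (Cspace (Ospace Y) (eobj d Sier))) U
   = kappa (endo_of d) Y y0 U.
Proof.
  destruct (proj2_sig x) as [y Hy]. destruct (proj2_sig y) as [y0 Hy0].
  exists y0. intros U. simpl. rewrite (gfun_eq x y Hy). apply Hy0.
Qed.

Definition gmap (x : carrier (kimage (kappa_endo d) Y)) : carrier (kimage (endo_of d) Y) :=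
  exist _ (exist _ (gfun x) (gfun_cont x)) (gfun_img x).

End Main.

Theorem corollary8 : forall (d : comp_endo) (Y : rep_space), admissible (kappa_endo d) Y.
Proof.
  intros d Y. split.
  - intros y1 y2 H. apply sig_eq, sig_eq. apply functional_extensionality. intros U.
    specialize (H U). apply (f_equal (fun z : carrier (kimage (endo_of d) Sier) => cval (proj1_sig z) idS)) in H.
    simpl in H. rewrite !ccomp_id in H. exact H.
  - exists (gmap d Y). split.
    + exists Qseq. split; [apply Qseq_computable|].
      intros p x Hx. exists (areal p). split; [apply Q_assoc|].
      intros u U Hu. destruct (Hx u U Hu) as [r1 [A1 B1]].
      destruct (B1 i0 idS idS_real) as [s [A2 B2]].
      exists s. split; [eapply core; eauto|]. exact B2.
    + intros phi y H. apply sig_eq, sig_eq. apply functional_extensionality. apply gfun_eq. exact H.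
Qed.
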